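(* Let $X,Y$ be finite abelian groups, let $Q\in M_{X\times Y}(\mathbb T)$ be generic, and put $$\theta_{ic}^{ke}=\frac{Q_{i,e-c}Q_{i-k,e}}{Q_{ie}Q_{i-k,e-c}}\qquad(i,k\in X,\ c,e\in Y).$$ For every $k\in X$ there is a group representation $\pi^k:\Gamma_{X,Y}\to U_{|Y|}$ on $\mathbb C^Y$ (standard basis $(\epsilon_e)_{e\in Y}$) given by $\pi^k(c^{(i)})\epsilon_e=\theta_{ic}^{ke}\epsilon_{e-c}$. Moreover the family $(\pi^k)_{k\in X}$ is projectively faithful: if $t\in\Gamma_{X,Y}$ is such that $\pi^k(t)$ is a scalar matrix for every $k\in X$, then $t=1$.
   Context: Finite abelian groups are written additively. $\Gamma_{X,Y}$ is the quotient of the free product $Y^{*X}$ of $|X|$ copies of $Y$ (the copy of $c\in Y$ in the $i$-th factor is $c^{(i)}$) by the relations $[c_1^{(i_1)}\cdots c_s^{(i_s)},d_1^{(j_1)}\cdots d_s^{(j_s)}]=1$ whenever $\sum_rc_r=\sum_rd_r=0$. Elements $p_1,\dots,p_m\in\mathbb T$ are root independent if $p_1^{r_1}\cdots p_m^{r_m}=1$ with $r_i\in\mathbb Z$ implies $r_1=\dots=r_m=0$. $Q$ is generic if it is dephased ($Q_{0c}=Q_{i0}=1$ for all $i\in X,c\in Y$) and the elements $Q_{ic}$ with $i\neq0,c\neq0$ are root independent. *)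

(* Defs.v *)
From HB Require Import structures.
From mathcomp Require Import all_boot all_order all_algebra.
From mathcomp Require Import complex reals.
Set Implicit Arguments. Unset Strict Implicit. Unset Printing Implicit Defensive.
Import Order.TTheory GRing.Theory Num.Theory.
Local Open Scope ring_scope.

Definition torus_valued (C : numDomainType) (X Y : Type) (Q : X -> Y -> C) :=
  forall i c, `|Q i c| = 1.

Definition dephased (C : nzRingType) (X Y : zmodType) (Q : X -> Y -> C) :=
  (forall c, Q 0 c = 1) /\ (forall i, Q i 0 = 1).

Definition root_independent (C : unitRingType) (I : finType) (P : pred I)
    (p : I -> C) :=
  forall r : I -> int, \prod_(j | P j) (p j) ^ (r j) = 1 -> forall j, P j -> r j = 0.

Definition generic (C : unitRingType) (X Y : finZmodType) (Q : X -> Y -> C) :=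
  dephased Q /\
  root_independent (fun ic : X * Y => (ic.1 != 0) && (ic.2 != 0))
                   (fun ic => Q ic.1 ic.2).

Definition theta (C : fieldType) (X Y : zmodType) (Q : X -> Y -> C)
    (i k : X) (c e : Y) : C :=
  Q i (e - c) * Q (i - k) e / (Q i e * Q (i - k) (e - c)).

(* Matrices on C^Y: rows/columns indexed by Y via enum_val : 'I_#|Y| -> Y.
   The standard basis vector eps_e is the column indexed by e.
   pi^k(c^(i)) eps_e = theta_{ic}^{ke} eps_{e-c}, i.e. column e has the single
   entry theta_{ic}^{ke} in row e - c. *)
Definition gen_mx (C : fieldType) (X Y : finZmodType) (Q : X -> Y -> C)
    (k i : X) (c : Y) : 'M[C]_#|Y| :=
  \matrix_(a, b) (if enum_val a == enum_val b - c
                  then theta Q i k c (enum_val b) else 0).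

(* Words in the generators c^(i) of the free product Y^{*X}: the letter (i, c)
   stands for c^(i).  (Inverses are not needed: (c^(i))^{-1} = (-c)^(i).) *)
Definition word (X Y : Type) := seq (X * Y).

Definition piw (C : fieldType) (X Y : finZmodType) (Q : X -> Y -> C) (k : X)
    (w : word X Y) : 'M[C]_#|Y| :=
  foldr (fun g M => gen_mx Q k g.1 g.2 *m M) 1%:M w.

(* Gamma_{X,Y} is the quotient of the free monoid on X x Y by the congruence
   gamma_eq generated by
   - the relations of the free product Y^{*X}: c^(i) d^(i) = (c+d)^(i), 0^(i) = 1;
   - [u, v] = 1, i.e. u v = v u, for u = c_1^(i_1)...c_s^(i_s),
     v = d_1^(j_1)...d_s^(j_s) with sum_r c_r = sum_r d_r = 0.
   (This monoid quotient is a group since c^(i) (-c)^(i) = 1.) *)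
Inductive gamma_eq (X Y : zmodType) : word X Y -> word X Y -> Prop :=
| ge_refl w : gamma_eq w w
| ge_sym u v : gamma_eq u v -> gamma_eq v u
| ge_trans u v w : gamma_eq u v -> gamma_eq v w -> gamma_eq u w
| ge_cat u u' v v' : gamma_eq u u' -> gamma_eq v v' -> gamma_eq (u ++ v) (u' ++ v')
| ge_mul (i : X) (c d : Y) : gamma_eq [:: (i, c); (i, d)] [:: (i, c + d)]
| ge_zero (i : X) : gamma_eq [:: (i, 0)] [::]
| ge_comm (u v : word X Y) :
    size u = size v ->
    \sum_(g <- u) g.2 = 0 -> \sum_(g <- v) g.2 = 0 ->
    gamma_eq (u ++ v) (v ++ u).

(* Main.v *)
Require Import Defs.
From HB Require Import structures.
From mathcomp Require Import all_boot all_order all_algebra.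
From mathcomp Require Import complex reals.
From mathcomp Require Import zify ring.
Set Implicit Arguments. Unset Strict Implicit. Unset Printing Implicit Defensive.
Import Order.TTheory GRing.Theory Num.Theory.
Local Open Scope ring_scope.

Section Mono.
Variables (C : numClosedFieldType) (Y : finZmodType).
Local Notation ev := (@enum_val Y (mem Y)).
Local Notation n := #|Y|.

Definition mono (w : Y -> C) (c : Y) : 'M[C]_n :=
  \matrix_(a, b) (if enum_val a == enum_val b - c then w (enum_val b) else 0).


Lemma sum_shift (F : 'I_n -> C) (a : 'I_n) (c : Y) :
  \sum_a' (if enum_val a == enum_val a' - c then F a' else 0) = F (enum_rank (enum_val a + c)).
Proof.
rewrite (bigD1 (enum_rank (enum_val a + c))) //= enum_rankK addrK eqxx big1 ?addr0 //.
move=> a' Hne; case: eqP => // E.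
by rewrite E subrK enum_valK eqxx in Hne.
Qed.

Lemma mono_mul w1 c1 w2 c2 :
  mono w1 c1 *m mono w2 c2 = mono (fun e => w1 (e - c2) * w2 e) (c1 + c2).
Proof.
apply/matrixP => a b; rewrite !mxE.
under eq_bigr => a' _ do rewrite !mxE (fun_if (fun x => x * _)) mul0r.
rewrite sum_shift enum_rankK.
have -> : (enum_val a + c1 == enum_val b - c2) = (enum_val a == enum_val b - (c1 + c2)).
  by rewrite opprD addrA addrAC; apply/eqP/eqP => [<-|->]; [rewrite addrK | rewrite subrK].
by case: eqP => [->|]; [rewrite opprD addrA addrAC subrK | rewrite mulr0].
Qed.

Lemma mono_one : mono (fun _ => 1) 0 = 1%:M.
Proof.
apply/matrixP => a b; rewrite !mxE subr0 (inj_eq enum_val_inj).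
by case: eqP.
Qed.

Lemma mono_unitary w c : (forall e, `|w e| = 1) -> mono w c \is unitarymx.
Proof.
move=> Hw; apply/unitarymxP; apply/matrixP => a b; rewrite !mxE.
under eq_bigr => a' _ do rewrite !mxE (fun_if (fun x => x * _)) mul0r.
rewrite sum_shift enum_rankK addrK.
case: (a =P b) => [->|Hab]; first by rewrite eqxx -normCK Hw expr1n.
by rewrite (inj_eq enum_val_inj) eq_sym; move/eqP/negbTE: Hab => ->; rewrite conjC0 mulr0.
Qed.

Lemma mono_scalar w s : (forall e, w e != 0) -> is_scalar_mx (mono w s) ->
  s = 0 /\ forall e, w e = w 0.
Proof.
move=> Hw /is_scalar_mxP [x Hx].
have H e : mono w s (enum_rank (e - s)) (enum_rank e) = w e.
  by rewrite mxE !enum_rankK eqxx.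
have Hs : s = 0.
  apply/eqP; apply/negPn/negP => Hs0.
  have := H 0; rewrite Hx mxE (inj_eq enum_rank_inj) sub0r.
  rewrite oppr_eq0 (negbTE Hs0) mulr0n => /esym/eqP.
  by rewrite (negbTE (Hw 0)).
split=> // e; subst s.
have := H e; have := H 0; rewrite Hx !mxE !subr0 !eqxx => <- <-.
by [].
Qed.
End Mono.


Section Words.
Variables (X Y : zmodType).
Local Notation word := (word X Y).
Local Notation ge := (@gamma_eq X Y).

Definition sig (w : word) : Y := \sum_(g <- w) g.2.

Lemma sig_cat u v : sig (u ++ v) = sig u + sig v.
Proof. by rewrite /sig big_cat. Qed.
Lemma sig_cons g w : sig (g :: w) = g.2 + sig w.
Proof. by rewrite /sig big_cons. Qed.
Lemma sig_nil : sig [::] = 0.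
Proof. by rewrite /sig big_nil. Qed.

Lemma ge_catl u v v' : ge v v' -> ge (u ++ v) (u ++ v').
Proof. by move=> H; exact: (ge_cat (Defs.ge_refl u) H). Qed.
Lemma ge_catr u u' v : ge u u' -> ge (u ++ v) (u' ++ v).
Proof. by move=> H; exact: (ge_cat H (Defs.ge_refl v)). Qed.
Lemma ge_drop u v : ge u [::] -> ge (u ++ v) v.
Proof. by move=> H; apply: (ge_catr v H). Qed.
Lemma ge_dropr u v : ge v [::] -> ge (u ++ v) u.
Proof. by move=> H; rewrite -{2}(cats0 u); apply: ge_catl. Qed.

Lemma ge_nseq n : ge (nseq n (0, 0)) [::].
Proof.
elim: n => [|n IH] /=; first exact: Defs.ge_refl.
apply: (Defs.ge_trans _ (@ge_zero X Y 0)); rewrite -cat1s; apply: ge_dropr IH.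
Qed.

Lemma sig_nseq n : sig (nseq n (0 : X, 0 : Y)) = 0.
Proof. by elim: n => [|n IH]; rewrite ?sig_nil // /= sig_cons IH addr0. Qed.

Lemma ge_commute u v : sig u = 0 -> sig v = 0 -> ge (u ++ v) (v ++ u).
Proof.
move=> Hu Hv.
set u' := u ++ nseq (size v) (0, 0); set v' := v ++ nseq (size u) (0, 0).
have Eu : ge u' u by apply: ge_dropr; apply: ge_nseq.
have Ev : ge v' v by apply: ge_dropr; apply: ge_nseq.
apply: Defs.ge_trans (ge_cat (Defs.ge_sym Eu) (Defs.ge_sym Ev)) _.
apply: Defs.ge_trans (ge_cat Ev Eu).
apply: ge_comm.
- by rewrite !size_cat !size_nseq addnC.
- by rewrite -/(sig u') /u' sig_cat Hu sig_nseq addr0.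
- by rewrite -/(sig v') /v' sig_cat Hv sig_nseq addr0.
Qed.

Definition gen (a : bool * (X * Y)) : word :=
  if a.1 then [:: (a.2.1, a.2.2); (0, - a.2.2)] else [:: (0, a.2.2); (a.2.1, - a.2.2)].

Definition Gw (L : seq (bool * (X * Y))) : word := flatten (map gen L).

Lemma sig_gen a : sig (gen a) = 0.
Proof. by rewrite /gen; case: ifP => _; rewrite !sig_cons sig_nil addr0 ?subrr // addNr. Qed.

Lemma sig_Gw L : sig (Gw L) = 0.
Proof. by elim: L => [|a L IH]; rewrite ?sig_nil // /Gw /= sig_cat sig_gen -/(Gw L) IH addr0. Qed.

Lemma ge_pair i c d : ge [:: (i, c); (i, d)] [:: (i, c + d)].
Proof. exact: ge_mul. Qed.

Lemma ge_cancel2 i c : ge [:: (i, c); (i, - c)] [::].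
Proof. by apply: (Defs.ge_trans (ge_mul _ _ _)); rewrite subrr; apply: ge_zero. Qed.

Lemma gen_inv b g : ge (gen (b, g) ++ gen (~~ b, g)) [::].
Proof.
case: g => i c; rewrite /gen /=; case: b => /=.
- rewrite -[[:: _; _; _; _]]/([:: (i, c)] ++ [:: (0, - c); (0, c)] ++ [:: (i, - c)]).
  apply: (Defs.ge_trans (ge_catl [:: (i, c)] (ge_drop [:: (i, - c)] _))); last exact: ge_cancel2.
  by apply: (Defs.ge_trans (ge_mul _ _ _)); rewrite addNr; apply: ge_zero.
- rewrite -[[:: _; _; _; _]]/([:: (0, c)] ++ [:: (i, - c); (i, c)] ++ [:: (0, - c)]).
  apply: (Defs.ge_trans (ge_catl [:: (0, c)] (ge_drop [:: (0, - c)] _))); last exact: ge_cancel2.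
  by apply: (Defs.ge_trans (ge_mul _ _ _)); rewrite addNr; apply: ge_zero.
Qed.

Lemma gen_triv b g : (g.1 == 0) || (g.2 == 0) -> ge (gen (b, g)) [::].
Proof.
case: g => i c /= /orP [/eqP ->|/eqP ->]; rewrite /gen /=; case: b => /=.
- exact: ge_cancel2.
- exact: ge_cancel2.
- rewrite oppr0 -cat1s; exact: (Defs.ge_trans (ge_drop [:: (0, 0)] (@ge_zero X Y i)) (@ge_zero X Y 0)).
- rewrite oppr0 -cat1s; exact: (Defs.ge_trans (ge_drop [:: (i, 0)] (@ge_zero X Y 0)) (@ge_zero X Y i)).
Qed.

Definition sgn (b : bool) : int := if b then 1 else -1.

Definition cnt (L : seq (bool * (X * Y))) (g : X * Y) : int :=
  \sum_(a <- L) (if a.2 == g then sgn a.1 else 0).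

Lemma cnt_cat L1 L2 g : cnt (L1 ++ L2) g = cnt L1 g + cnt L2 g.
Proof. by rewrite /cnt big_cat. Qed.
Lemma cnt_cons a L g : cnt (a :: L) g = (if a.2 == g then sgn a.1 else 0) + cnt L g.
Proof. by rewrite /cnt big_cons. Qed.
Lemma cnt_nil g : cnt [::] g = 0.
Proof. by rewrite /cnt big_nil. Qed.

Lemma notin_sign b g L : (~~ b, g) \notin L -> 0 <= sgn b * cnt L g.
Proof.
elim: L => [|[b' g'] L IH]; first by rewrite cnt_nil mulr0.
rewrite in_cons negb_or => /andP [Hne /IH]; rewrite cnt_cons /= mulrDr.
case: eqP => [Eg|_]; last by rewrite mulr0 add0r.
subst g'; move=> H; move: Hne H {IH}.
case: b; case: b' => /= Hne H; rewrite ?eqxx // in Hne;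
  by apply: addr_ge0 => //; rewrite ?mulN1r ?opprK ?mul1r.
Qed.

Lemma Gw_cons a L : Gw (a :: L) = gen a ++ Gw L.
Proof. by []. Qed.
Lemma Gw_cat L1 L2 : Gw (L1 ++ L2) = Gw L1 ++ Gw L2.
Proof. by rewrite /Gw map_cat flatten_cat. Qed.

Lemma Gw_cancel n L : (size L < n)%N ->
  (forall g, g.1 != 0 -> g.2 != 0 -> cnt L g = 0) -> ge (Gw L) [::].
Proof.
elim: n L => [|n IH] [|[b g] L] //=; first by move=> _ _; apply: Defs.ge_refl.
rewrite ltnS => Hs Hc.
have [Htriv|Hnt] := boolP ((g.1 == 0) || (g.2 == 0)).
  apply: (Defs.ge_trans (ge_drop (Gw L) (gen_triv b Htriv))).
  apply: IH => // h h1 h2; have := Hc h h1 h2; rewrite cnt_cons /=.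
  case: eqP => [Eh|]; last by rewrite add0r.
  by subst h; rewrite (negbTE h1) (negbTE h2) in Htriv.
move: Hnt; rewrite negb_or => /andP [g1 g2].
have Hin : (~~ b, g) \in L.
  apply/negPn/negP => /notin_sign; have := Hc g g1 g2.
  rewrite cnt_cons /= eqxx => /eqP; rewrite addrC addr_eq0 => /eqP ->.
  by clear Hc; case: b.
move: Hs Hc; case/splitPr: Hin => L1 L2 Hs Hc.
rewrite Gw_cons Gw_cat Gw_cons [Gw L1 ++ _]catA.
apply: (Defs.ge_trans (ge_catl (gen (b, g)) (ge_catr (Gw L2) (ge_commute (sig_Gw L1) (sig_gen (~~ b, g)))))).
rewrite -!catA catA.
apply: (Defs.ge_trans (ge_drop _ (gen_inv b g))).
rewrite -Gw_cat; apply: IH.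
  by move: Hs; rewrite !size_cat /= addnS; apply: ltnW.
move=> h h1 h2; rewrite -(Hc h h1 h2) cnt_cons !cnt_cat cnt_cons /=.
case: eqP => _; last by rewrite !add0r.
by clear Hs Hc; case: b; rewrite /sgn /=; lia.
Qed.

Lemma nf w : exists L, ge w (Gw L ++ [:: (0, sig w)]).
Proof.
elim/last_ind: w => [|w [i c] [L IH]].
  by exists [::]; rewrite sig_nil; apply: Defs.ge_sym; apply: ge_zero.
exists (L ++ [:: (false, (i, sig w)); (true, (i, sig w + c))]).
rewrite -cats1 sig_cat sig_cons sig_nil addr0.
apply: (Defs.ge_trans (ge_catr [:: (i, c)] IH)).
rewrite Gw_cat -!catA; apply: ge_catl.
set s := sig w.
rewrite /Gw /= /gen /=.
rewrite -[[:: _; _; _; _; _]]/([:: (0, s)] ++ [:: (i, - s); (i, s + c)] ++ [:: (0, - (s + c)); (0, s + c)]).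
rewrite -[[:: (0, s); (i, c)]]/([:: (0, s)] ++ [:: (i, c)] ++ [::]).
apply: ge_catl; apply: ge_cat.
  by have := ge_mul i (- s) (s + c); rewrite addKr => /Defs.ge_sym.
apply: Defs.ge_sym; apply: (Defs.ge_trans (ge_mul _ _ _)); rewrite addNr; apply: ge_zero.
Qed.
End Words.


Section Rep.
Variables (C : numClosedFieldType) (X Y : finZmodType) (Q : X -> Y -> C).
Hypothesis Hnz : forall i c, Q i c != 0.
Local Notation ge := (@gamma_eq X Y).

Lemma theta_nz i k c e : theta Q i k c e != 0.
Proof. by rewrite /theta !mulf_neq0 ?invr_neq0 ?mulf_neq0. Qed.

Lemma theta0 i k e : theta Q i k 0 e = 1.
Proof. by rewrite /theta subr0 divff // mulf_neq0. Qed.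

Lemma theta_mul i k c d e :
  theta Q i k c (e - d) * theta Q i k d e = theta Q i k (c + d) e.
Proof.
rewrite /theta -addrA -opprD [d + c]addrC.
have := Hnz i (e - d); have := Hnz (i - k) (e - d); have := Hnz i e; have := Hnz (i - k) e.
have := Hnz i (e - (c + d)); have := Hnz (i - k) (e - (c + d)).
move=> *; field.
by rewrite !Hnz.
Qed.

Fixpoint wt k (w : word X Y) : Y -> C :=
  if w is g :: w' then (fun e => theta Q g.1 k g.2 (e - sig w') * wt k w' e)
  else (fun _ => 1).

Lemma wt_nz k w e : wt k w e != 0.
Proof. by elim: w => [|g w IH] /=; rewrite ?oner_neq0 // mulf_neq0 ?theta_nz. Qed.

Lemma wt_cat k u v e : wt k (u ++ v) e = wt k u (e - sig v) * wt k v e.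
Proof.
elim: u => [|g u IH] /=; first by rewrite mul1r.
by rewrite IH sig_cat mulrA opprD addrA [e - _ - _]addrAC.
Qed.

Lemma ge_inv k u v : ge u v -> sig u = sig v /\ forall e, wt k u e = wt k v e.
Proof.
elim=> {u v}.
- by [].
- by move=> u v _ [-> H]; split=> // e; rewrite H.
- by move=> u v w _ [-> H1] _ [-> H2]; split=> // e; rewrite H1 H2.
- move=> u u' v v' _ [Hu Wu] _ [Hv Wv]; rewrite !sig_cat Hu Hv; split=> // e.
  by rewrite !wt_cat Wu Wv Hv.
- move=> i c d; rewrite !sig_cons sig_nil !addr0; split=> // e /=.
  by rewrite !sig_cons !sig_nil !addr0 !subr0 !mulr1 theta_mul.
- by move=> i; rewrite sig_cons sig_nil addr0; split=> // e /=; rewrite sig_nil theta0 mulr1.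
- move=> u v _ Hu Hv; have {}Hu : sig u = 0 by []; have {}Hv : sig v = 0 by [].
  rewrite !sig_cat Hu Hv; split=> // e.
  by rewrite !wt_cat Hu Hv subr0 mulrC.
Qed.

Lemma piw_mono k w : piw Q k w = mono (wt k w) (sig w).
Proof.
elim: w => [|g w IH] /=; first by rewrite sig_nil mono_one.
rewrite IH sig_cons.
have -> : gen_mx Q k g.1 g.2 = mono (theta Q g.1 k g.2) g.2 by [].
by rewrite mono_mul.
Qed.
End Rep.


Section Eps.
Variables (X Y : finZmodType).
Definition ind (A x : X * Y) : int := (x == A)%:R.
Definition eps (k : X) (e : Y) (g x : X * Y) : int :=
  ind (- k, e) x - ind (- k, e + g.2) x + ind (g.1, e) x - ind (g.1, e + g.2) x
  + ind (g.1 - k, e + g.2) x - ind (g.1 - k, e) x.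
End Eps.

Section Mon.
Variables (C : numClosedFieldType) (X Y : finZmodType) (Q : X -> Y -> C).
Hypothesis Hnz : forall i c, Q i c != 0.

Definition mon (z : X * Y -> int) : C := \prod_x Q x.1 x.2 ^ z x.

Lemma prod_expz (x : C) (I : Type) (r : seq I) (P : pred I) (F : I -> int) : x != 0 ->
  \prod_(i <- r | P i) x ^ F i = x ^ (\sum_(i <- r | P i) F i).
Proof.
move=> Hx; apply: (big_rec2 (fun a b => a = x ^ b)) => [|i a b _ ->]; first by rewrite expr0z.
by rewrite expfzDr.
Qed.

Lemma mon_ind A : mon (ind A) = Q A.1 A.2.
Proof.
rewrite /mon (bigD1 A) //= /ind eqxx expr1z big1 ?mulr1 // => x /negbTE ->.
by rewrite expr0z.
Qed.

Lemma mon_add z1 z2 : mon (fun x => z1 x + z2 x) = mon z1 * mon z2.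
Proof. by rewrite /mon -big_split /=; apply: eq_bigr => x _; rewrite expfzDr. Qed.

Lemma mon_opp z : mon (fun x => - z x) = (mon z)^-1.
Proof. by rewrite /mon -prodfV; apply: eq_bigr => x _; rewrite invr_expz. Qed.

Lemma mon_pow z n : mon z ^ n = mon (fun x => n * z x).
Proof.
rewrite /mon; apply: (big_rec2 (fun a b => b ^ n = a)) => [|i a b _ <-]; first by rewrite exp1rz.
by rewrite expfzMl exprz_exp [z i * n]mulrC.
Qed.

Lemma mon_prod (I : finType) (Z : I -> X * Y -> int) :
  \prod_i mon (Z i) = mon (fun x => \sum_i Z i x).
Proof.
rewrite /mon exchange_big /=; apply: eq_bigr => x _.
by rewrite prod_expz.
Qed.

Lemma mon_nz z : mon z != 0.
Proof. by rewrite /mon; apply/prodf_neq0 => x _; rewrite expfz_neq0. Qed.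
End Mon.


Lemma sum_except (I : finType) (F : I -> int) (i0 : I) v :
  (forall i, i != i0 -> F i = v) -> \sum_i F i = v *+ #|I| + F i0 - v.
Proof.
move=> H.
have -> : \sum_i F i = \sum_(i : I) v + (F i0 - v).
  rewrite (bigD1 i0) //= [X in _ = X + _](bigD1 i0) //= (eq_bigr (fun _ => v)) //.
  ring.
by rewrite sumr_const addrA.
Qed.

Section Lin.
Variables (X Y : finZmodType).

Definition del (e f c : Y) : int := (f == e)%:R - (f == e + c)%:R + (f == c)%:R.

Lemma eps_diff (k i j : X) (e c f : Y) : f != 0 ->
  eps k e (i, c) (j, f) - eps k 0 (i, c) (j, f) =
  ((j == - k)%:R + (j == i)%:R - (j == i - k)%:R) * del e f c.
Proof.
move=> Hf; rewrite /eps /ind /del !xpair_eqE /= !add0r (negbTE Hf).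
by case: (j == - k); case: (f == e); case: (f == e + c); case: (j == i);
  case: (j == i - k); case: (f == c).
Qed.

Variable r : X * Y -> int.

Definition Dj (j : X) (e f : Y) : int := \sum_c r (j, c) * del e f c.

Lemma sum_pick (I : finType) (F : I -> int) (P : I -> bool) (i0 : I) :
  (forall i, P i = (i == i0)) -> \sum_i (P i)%:R * F i = F i0.
Proof.
move=> HP; rewrite (bigD1 i0) //= HP eqxx mul1r big1 ?addr0 // => i Hi.
by rewrite HP (negbTE Hi) mul0r.
Qed.

Lemma sum_diff k e j f : f != 0 ->
  \sum_g r g * (eps k e g (j, f) - eps k 0 g (j, f)) =
  (j == - k)%:R * \sum_i Dj i e f + Dj j e f - Dj (j + k) e f.
Proof.
move=> Hf.
transitivity (\sum_i \sum_c r (i, c) * (eps k e (i, c) (j, f) - eps k 0 (i, c) (j, f))).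
  by rewrite pair_big; apply: eq_bigr => [[i c]] _.
transitivity (\sum_i ((j == - k)%:R + (j == i)%:R - (j == i - k)%:R) * Dj i e f).
  apply: eq_bigr => i _; rewrite /Dj big_distrr; apply: eq_bigr => c _.
  by rewrite eps_diff // mulrCA.
rewrite (eq_bigr (fun i => (j == - k)%:R * Dj i e f + ((j == i)%:R * Dj i e f - (j == i - k)%:R * Dj i e f)));
  last by move=> i _; rewrite mulrBl mulrDl addrA.
rewrite big_split sumrB /= -big_distrr /= addrA; congr (_ + _ - _).
  by apply: sum_pick => i; rewrite eq_sym.
apply: sum_pick => i; apply/eqP/eqP => [->|->]; first by rewrite subrK.
by rewrite addrK.
Qed.

Lemma natmul_eq0 (I : finType) (i0 : I) (x : int) : x *+ #|I| = 0 -> x = 0.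
Proof.
move/eqP; rewrite mulrn_eq0 => /orP [|/eqP //].
have : (0 < #|I|)%N by apply/card_gt0P; exists i0.
by move=> /lt0n_neq0 /negbTE ->.
Qed.

Lemma lin_main :
  (forall k e j f, j != 0 -> f != 0 ->
     \sum_g r g * eps k e g (j, f) = \sum_g r g * eps k 0 g (j, f)) ->
  forall j c, j != 0 -> c != 0 -> r (j, c) = 0.
Proof.
move=> H.
have HH k e j f : j != 0 -> f != 0 ->
    (j == - k)%:R * \sum_i Dj i e f + Dj j e f - Dj (j + k) e f = 0.
  move=> Hj Hf; rewrite -sum_diff //.
  under eq_bigr do rewrite mulrBr.
  by rewrite sumrB H // subrr.
have Dconst e f j j' : j != 0 -> j' != 0 -> f != 0 -> Dj j e f = Dj j' e f.
  move=> Hj Hj' Hf; have := HH (j' - j) e j f Hj Hf.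
  have -> : (j == - (j' - j)) = false.
    rewrite opprB -{1}(addr0 j) (inj_eq (addrI j)) eq_sym oppr_eq0.
    exact: negbTE.
  rewrite mul0r add0r [j + _]addrC subrK => /eqP; rewrite subr_eq0 => /eqP.
  by [].
have Dzero e f j : j != 0 -> f != 0 -> Dj j e f = 0.
  move=> Hj Hf; have := HH (- j) e j f Hj Hf; rewrite opprK eqxx mul1r subrr.
  rewrite (@sum_except _ (fun i => Dj i e f) 0 (Dj j e f)) => [E|i Hi]; last first.
    by apply: Dconst.
  apply: (@natmul_eq0 X 0).
  by rewrite -[RHS]E; ring.
move=> j c Hj Hc.
have Dform e f : Dj j e f = (f == e)%:R * \sum_c r (j, c) - r (j, f - e) + r (j, f).
  rewrite /Dj /del; under eq_bigr do rewrite mulrDr mulrBr.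
  rewrite big_split sumrB /=.
  congr (_ - _ + _).
  - by rewrite big_distrr; apply: eq_bigr => c' _; rewrite mulrC.
  - have := @sum_pick _ (fun c' => r (j, c')) (fun c' => c' == f - e) (f - e) (fun _ => erefl).
    move=> /= <-; apply: eq_bigr => c' _.
    rewrite mulrC; congr (_%:R * _).
    by congr nat_of_bool; rewrite [RHS]eq_sym subr_eq addrC.
  - have := @sum_pick _ (fun c' => r (j, c')) (fun c' => c' == f) f (fun _ => erefl).
    move=> /= <-; apply: eq_bigr => c' _.
    by rewrite mulrC eq_sym.
have Hconst g : g != 0 -> r (j, g) = r (j, c).
  move=> Hg; have := Dzero (c - g) c j Hj Hc; rewrite Dform.
  have -> : (c == c - g) = false.
    rewrite -{1}(addr0 c) (inj_eq (addrI c)) eq_sym oppr_eq0.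
    exact: negbTE.
  rewrite mul0r sub0r opprB [c + _]addrC subrK addrC => /eqP; rewrite subr_eq0 => /eqP ->.
  by [].
have := Dzero c c j Hj Hc; rewrite Dform eqxx mul1r subrr.
rewrite (@sum_except _ (fun c' => r (j, c')) 0 (r (j, c))) => [E|c' Hc']; last first.
  by apply: Hconst.
apply: (@natmul_eq0 Y 0).
by rewrite -[RHS]E; ring.
Qed.
End Lin.


Section Final.
Variables (C : numClosedFieldType) (X Y : finZmodType) (Q : X -> Y -> C).
Hypothesis Hnz : forall i c, Q i c != 0.
Hypothesis Hdeph : dephased Q.
Local Notation ge := (@gamma_eq X Y).

Lemma wt_gen_true k e i c : wt Q k (gen (true, (i, c))) e = mon Q (eps k e (i, c)).
Proof.
have -> : eps k e (i, c) = (fun x => ind (- k, e) x - ind (- k, e + c) x + ind (i, e) x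
   - ind (i, e + c) x + ind (i - k, e + c) x - ind (i - k, e) x) by [].
rewrite !mon_add // !mon_opp // !mon_ind /=.
rewrite /gen /= !sig_cons !sig_nil !addr0 subr0 mulr1 /theta.
case: Hdeph => H0 _; rewrite !H0 sub0r opprK addrK !mul1r.
by field; rewrite ?Hnz.
Qed.

Lemma wt_gen_false k e g : wt Q k (gen (false, g)) e = (wt Q k (gen (true, g)) e)^-1.
Proof.
have [_ /(_ e)] := ge_inv Hnz k (gen_inv false g : ge (gen (false, g) ++ gen (true, g)) [::]).
rewrite wt_cat sig_gen subr0 => H.
by rewrite -[LHS]mulr1 -(divff (wt_nz Hnz k (gen (true, g)) e)) mulrA H mul1r.
Qed.

Lemma wt_Gw k e L :
  wt Q k (Gw L) e = mon Q (fun x => \sum_g cnt L g * eps k e g x).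
Proof.
rewrite -mon_prod //; under eq_bigr => g _ do rewrite -mon_pow //.
elim: L => [|[b g] L IH].
  by rewrite big1 // => g _; rewrite cnt_nil expr0z.
rewrite Gw_cons wt_cat sig_Gw subr0 IH.
rewrite [RHS](eq_bigr (fun h => mon Q (eps k e h) ^ (if g == h then sgn b else 0) * mon Q (eps k e h) ^ cnt L h)); last first.
  by move=> h _; rewrite cnt_cons expfzDr ?mon_nz.
rewrite big_split /=; congr (_ * _).
rewrite (bigD1 g) //= eqxx big1 ?mulr1; last first.
  by move=> h /negbTE; rewrite eq_sym => ->; rewrite expr0z.
case: g => i c; case: b; rewrite /sgn ?expr1z ?exprN1 ?wt_gen_true //.
by rewrite wt_gen_false wt_gen_true.
Qed.
End Final.


Unset Implicit Arguments.

Lemma ri_zero (C : numClosedFieldType) (X Y : finZmodType) (Q : X -> Y -> C) :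
  dephased Q ->
  root_independent (fun ic : X * Y => (ic.1 != 0) && (ic.2 != 0)) (fun ic => Q ic.1 ic.2) ->
  forall z, mon Q z = 1 -> forall x : X * Y, x.1 != 0 -> x.2 != 0 -> z x = 0.
Proof.
move=> [H0 H1] Hri z Hz x h1 h2; apply: Hri; last by rewrite h1 h2.
apply: (etrans _ Hz); rewrite /mon [RHS](bigID (fun ic : X * Y => (ic.1 != 0) && (ic.2 != 0))) /=.
rewrite [X in _ = _ * X]big1 ?mulr1 //.
move=> [i c] /= /nandP [/negPn/eqP ->|/negPn/eqP ->].
  by rewrite H0 exp1rz.
by rewrite H1 exp1rz.
Qed.

Theorem lemma4p4 (R : realType) (X Y : finZmodType) (Q : X -> Y -> R[i]) :
  torus_valued Q -> generic Q ->
  (* each pi^k(c^(i)) is unitary *)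
  (forall (k i : X) (c : Y), gen_mx Q k i c \is unitarymx) /\
  (* pi^k is well defined on Gamma_{X,Y} (respects all defining relations) *)
  (forall (k : X) (u v : word X Y), gamma_eq u v -> piw Q k u = piw Q k v) /\
  (* projective faithfulness of (pi^k)_{k in X} *)
  (forall t : word X Y, (forall k : X, is_scalar_mx (piw Q k t)) -> gamma_eq t [::]).
Proof.
move=> Htor [Hdeph Hri].
have Hnz i c : Q i c != 0 by rewrite -normr_eq0 Htor oner_neq0.
split; [|split].
- move=> k i c; have -> : gen_mx Q k i c = mono (theta Q i k c) c by [].
  apply: mono_unitary => e.
  by rewrite /theta normrM normfV !normrM !Htor !mul1r invr1.
- move=> k u v H; have [Hs Hw] := ge_inv Hnz k H; rewrite !piw_mono Hs.
  by apply/matrixP => a b; rewrite !mxE Hw.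
move=> t Hsc.
have Hk k : sig t = 0 /\ forall e, wt Q k t e = wt Q k t 0.
  apply: mono_scalar; first exact: wt_nz.
  by rewrite -piw_mono.
have [Hs0 _] := Hk 0.
have [L HL] := nf t; rewrite Hs0 in HL.
have Hz : gamma_eq (Gw L ++ [:: (0, 0)]) (Gw L) := ge_dropr (Gw L) (@ge_zero X Y 0).
have HtL := Defs.ge_trans HL Hz.
apply: (Defs.ge_trans HtL).
apply: (@Gw_cancel _ _ (size L).+1) => // -[j c] /= g1 g2.
apply: (lin_main (r := cnt L)) => // k e j' f hj hf.
have E1 : mon Q (fun x => \sum_g cnt L g * eps k e g x) =
          mon Q (fun x => \sum_g cnt L g * eps k 0 g x).
  rewrite -!wt_Gw //; have [_ Hw] := ge_inv Hnz k HtL.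
  by rewrite -!Hw; exact: (Hk k).2.
have E2 : mon Q (fun x => \sum_g cnt L g * eps k e g x - \sum_g cnt L g * eps k 0 g x) = 1.
  by rewrite mon_add // mon_opp // E1 divff // mon_nz.
by apply: subr0_eq; exact: (@ri_zero _ _ _ Q Hdeph Hri _ E2 (j', f) hj hf).
Qed.
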